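(* Let $\mathcal{D}\in\mathbb{C}^{\mathbf{N}(s)\times\mathbf{N}(s)}$ with $\mathrm{ind}(\mathcal{D})=k$. Then (i) $\mathcal{D}^{\mathrm D,\dagger}*_s\mathcal{D}=\mathcal{D}^{c,\dagger}*_s\mathcal{D}$ if and only if $\mathscr{R}(\mathcal{D}^k)\subseteq\mathscr{R}(\mathcal{D}^\dagger)$; (ii) $\mathcal{D}*_s\mathcal{D}^{\dagger,\mathrm D}=\mathcal{D}*_s\mathcal{D}^{c,\dagger}$ if and only if $\mathcal{D}^k=\mathcal{D}^{k+1}*_s\mathcal{D}^\dagger$.
   Context: For positive integers $N_1,\dots,N_s$ write $\mathbf{N}(s)=N_1\times\cdots\times N_s$. For $\mathcal{A}\in\mathbb{C}^{\mathbf{I}(m)\times\mathbf{K}(p)}$ and $\mathcal{B}\in\mathbb{C}^{\mathbf{K}(p)\times\mathbf{J}(n)}$ the Einstein product is the tensor $\mathcal{A}*_p\mathcal{B}\in\mathbb{C}^{\mathbf{I}(m)\times\mathbf{J}(n)}$ with entries $(\mathcal{A}*_p\mathcal{B})_{i_1\dots i_m j_1\dots j_n}=\sum_{k_1,\dots,k_p}\mathcal{A}_{i_1\dots i_m k_1\dots k_p}\mathcal{B}_{k_1\dots k_p j_1\dots j_n}$; the case $n=0$ (so $\mathcal{B}\in\mathbb{C}^{\mathbf{K}(p)}$) is allowed. For $\mathcal{D}\in\mathbb{C}^{\mathbf{N}(s)\times\mathbf{N}(s)}$, powers are $\mathcal{D}^0=\mathcal{I}$, $\mathcal{D}^{j+1}=\mathcal{D}*_s\mathcal{D}^j$,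 where $\mathcal{I}$ is the identity tensor with entries $\mathcal{I}_{i_1\dots i_s j_1\dots j_s}=\prod_{t=1}^s\delta_{i_tj_t}$. The conjugate transpose $\mathcal{A}^*$ of $\mathcal{A}\in\mathbb{C}^{\mathbf{M}(m)\times\mathbf{N}(n)}$ has entries $(\mathcal{A}^* )_{j_1\dots j_n i_1\dots i_m}=\overline{\mathcal{A}_{i_1\dots i_m j_1\dots j_n}}$. For $\mathcal{A}\in\mathbb{C}^{\mathbf{M}(m)\times\mathbf{N}(n)}$, $\mathscr{R}(\mathcal{A})=\{\mathcal{A}*_n\mathcal{E}:\mathcal{E}\in\mathbb{C}^{\mathbf{N}(n)}\}$. The index $\mathrm{ind}(\mathcal{D})$ of $\mathcal{D}\in\mathbb{C}^{\mathbf{N}(s)\times\mathbf{N}(s)}$ is the smallest nonnegative integer $k$ with $\dim\mathscr{R}(\mathcal{D}^k)=\dim\mathscr{R}(\mathcal{D}^{k+1})$. The Moore–Penrose inverse $\mathcal{D}^\dagger$ of $\mathcal{D}\in\mathbb{C}^{\mathbf{N}(s)\times\mathbf{N}(s)}$ is the unique $\mathcal{Y}$ with $\mathcal{D}*_s\mathcal{Y}*_s\mathcal{D}=\mathcal{D}$, $\mathcal{Y}*_s\mathcal{D}*_s\mathcal{Y}=\mathcal{Y}$, $(\mathcal{D}*_s\mathcal{Y})^*=\mathcal{D}*_s\mathcal{Y}$, $(\mathcal{Y}*_s\mathcal{D})^*=\mathcal{Y}*_s\mathcal{D}$. With $k=\mathrm{ind}(\mathcal{D})$, the Drazin inverse $\mathcal{D}^{\mathrm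 D}$ is the unique $\mathcal{Y}$ with $\mathcal{Y}*_s\mathcal{D}^{k+1}=\mathcal{D}^k$, $\mathcal{Y}*_s\mathcal{D}*_s\mathcal{Y}=\mathcal{Y}$, $\mathcal{D}*_s\mathcal{Y}=\mathcal{Y}*_s\mathcal{D}$. Composite inverses: $\mathcal{D}^{\mathrm D,\dagger}=\mathcal{D}^{\mathrm D}*_s\mathcal{D}*_s\mathcal{D}^\dagger$ (DMP), $\mathcal{D}^{\dagger,\mathrm D}=\mathcal{D}^\dagger*_s\mathcal{D}*_s\mathcal{D}^{\mathrm D}$ (MPD), $\mathcal{D}^{c,\dagger}=\mathcal{D}^\dagger*_s\mathcal{D}*_s\mathcal{D}^{\mathrm D}*_s\mathcal{D}*_s\mathcal{D}^\dagger$ (CMP). *)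

(* Defs.v *)
From HB Require Import structures.
From mathcomp Require Import all_boot all_order all_algebra.
From mathcomp Require Import complex.
From mathcomp Require Import reals.
Set Implicit Arguments. Unset Strict Implicit. Unset Printing Implicit Defensive.
Import Order.TTheory GRing.Theory Num.Theory.
Local Open Scope ring_scope.

Section Tensors.
Variable R : realType.
Local Notation C := (R[i]).

(* Multi-indices (i_1,...,i_s) with 1 <= i_t <= N_t (0-based here). *)
Definition idx (s : nat) (N : 'I_s -> nat) := {dffun forall t : 'I_s, 'I_(N t)}.

Definition tensor s (N : 'I_s -> nat) := idx N -> idx N -> C.
Definition vtensor s (N : 'I_s -> nat) := {ffun idx N -> C^o}.

Variables (s : nat) (N : 'I_s -> nat).

Definition eprod (A B : tensor N) : tensor N :=
  fun i j => \sum_(k : idx N) A i k * B k j.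
Definition eprodv (A : tensor N) (E : vtensor N) : vtensor N :=
  [ffun i => \sum_(k : idx N) A i k * E k].

Definition eid : tensor N := fun i j => (i == j)%:R.

Fixpoint epow (D : tensor N) (j : nat) : tensor N :=
  match j with 0 => eid | j'.+1 => eprod D (epow D j') end.

Definition ctrans (A : tensor N) : tensor N := fun j i => (A i j)^*.

Definition trange (A : tensor N) (X : vtensor N) : Prop :=
  exists E : vtensor N, X = eprodv A E.

Definition trange_vs (A : tensor N) : {vspace vtensor N} :=
  limg (linfun (eprodv A)).

Definition tdim (A : tensor N) : nat := \dim (trange_vs A).

Definition is_index (D : tensor N) (k : nat) : Prop :=
  tdim (epow D k) = tdim (epow D k.+1) /\
  forall j, (j < k)%N -> tdim (epow D j) <> tdim (epow D j.+1).

Definition is_MP (D Y : tensor N) : Prop :=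
  [/\ eprod (eprod D Y) D = D, eprod (eprod Y D) Y = Y,
      ctrans (eprod D Y) = eprod D Y & ctrans (eprod Y D) = eprod Y D].

Definition is_Drazin (D Y : tensor N) (k : nat) : Prop :=
  [/\ eprod Y (epow D k.+1) = epow D k, eprod (eprod Y D) Y = Y
    & eprod D Y = eprod Y D].

(* Composite inverses, given the MP inverse Dd and Drazin inverse DD *)
Definition DMP (D Dd DD : tensor N) : tensor N := eprod (eprod DD D) Dd.
Definition MPD (D Dd DD : tensor N) : tensor N := eprod (eprod Dd D) DD.
Definition CMP (D Dd DD : tensor N) : tensor N :=
  eprod (eprod (eprod (eprod Dd D) DD) D) Dd.

End Tensors.

(* Main.v *)
Require Import Defs.
From HB Require Import structures.
From mathcomp Require Import all_boot all_order all_algebra.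
From mathcomp Require Import complex.
From mathcomp Require Import reals.
From Stdlib Require Import FunctionalExtensionality.
Import Order.TTheory GRing.Theory Num.Theory.
Local Open Scope ring_scope.
Set Implicit Arguments. Unset Strict Implicit.

Section Aux.
Variables (R : realType) (s : nat) (N : 'I_s -> nat).
Local Notation T := (tensor R N).

Lemma teq (A B : T) : (forall i j, A i j = B i j) -> A = B.
Proof.
move=> H; apply: functional_extensionality => i.
apply: functional_extensionality => j; exact: H.
Qed.

Lemma eprodA (A B C : T) : eprod (eprod A B) C = eprod A (eprod B C).
Proof.
apply: teq => i j; rewrite /eprod.
under eq_bigr => k _ do rewrite big_distrl /=.
rewrite exchange_big /=; apply: eq_bigr => l _.
rewrite big_distrr /=; apply: eq_bigr => k _; by rewrite mulrA.
Qed.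

Lemma eprod1l (A : T) : eprod (@eid R s N) A = A.
Proof.
apply: teq => i j; rewrite /eprod /eid (bigD1 i) //= eqxx mul1r big1 ?addr0 //.
by move=> k; rewrite eq_sym => /negbTE ->; rewrite mul0r.
Qed.

Lemma eprod1r (A : T) : eprod A (@eid R s N) = A.
Proof.
apply: teq => i j; rewrite /eprod /eid (bigD1 j) //= eqxx mulr1 big1 ?addr0 //.
by move=> k /negbTE ->; rewrite mulr0.
Qed.

Lemma epowSr (A : T) m : epow A m.+1 = eprod (epow A m) A.
Proof.
elim: m => [|m IH]; first by rewrite /= eprod1l eprod1r.
transitivity (eprod A (epow A m.+1)); first by [].
by rewrite {1}IH -eprodA.
Qed.

Lemma epow_comm (A B : T) m : eprod A B = eprod B A ->
  eprod (epow A m) B = eprod B (epow A m).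
Proof.
move=> H; elim: m => [|m IH] /=; first by rewrite eprod1l eprod1r.
by rewrite eprodA IH -eprodA H eprodA.
Qed.

Lemma eprodvA (A B : T) (E : vtensor R N) :
  eprodv (eprod A B) E = eprodv A (eprodv B E).
Proof.
apply/ffunP => i; rewrite !ffunE /eprod.
under eq_bigr => k _ do rewrite big_distrl /=.
rewrite exchange_big /=; apply: eq_bigr => l _.
rewrite ffunE big_distrr /=; apply: eq_bigr => k _; by rewrite mulrA.
Qed.

Definition ebas (j : idx N) : vtensor R N := [ffun i => (i == j)%:R].

Lemma eprodv_bas (A : T) j i : eprodv A (ebas j) i = A i j.
Proof.
rewrite ffunE (bigD1 j) //= ffunE eqxx mulr1 big1 ?addr0 //.
by move=> k /negbTE; rewrite ffunE => ->; rewrite mulr0.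
Qed.

Lemma Zpow (D Z : T) m : eprod D Z = eprod Z D -> eprod (eprod Z D) Z = Z ->
  Z = eprod (epow Z m.+1) (epow D m).
Proof.
move=> HC HZ; elim: m => [|m IH]; first by rewrite /= !eprod1r.
have HC2 : eprod Z (eprod Z D) = eprod (eprod Z D) Z by rewrite eprodA HC.
rewrite (epowSr Z m.+1).
change (Z = eprod (eprod (epow Z m.+1) Z) (eprod D (epow D m))).
rewrite eprodA -(eprodA Z D) -eprodA (epow_comm _ HC2) eprodA -IH.
by rewrite HZ.
Qed.
End Aux.

Theorem mainTheorem8 (R : realType) (s : nat) (N : 'I_s -> nat)
  (D Dd DD : tensor R N) (k : nat) :
  is_index D k -> is_MP D Dd -> is_Drazin D DD k ->
  (eprod (DMP D Dd DD) D = eprod (CMP D Dd DD) D <->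
     (forall X, trange (epow D k) X -> trange Dd X)) /\
  (eprod D (MPD D Dd DD) = eprod D (CMP D Dd DD) <->
     epow D k = eprod (epow D k.+1) Dd).
Proof.
move=> _ [H1 H2 _ _] [Z1 Z2 Z3].
rename Dd into Y; rename DD into Z.
have DYD : forall X, eprod D (eprod Y (eprod D X)) = eprod D X.
  by move=> X; rewrite -(eprodA _ _ (eprod D X)) -eprodA H1.
have DYD0 : eprod D (eprod Y D) = D by rewrite -eprodA H1.
have YDY : forall X, eprod Y (eprod D (eprod Y X)) = eprod Y X.
  by move=> X; rewrite -(eprodA _ _ (eprod Y X)) -eprodA H2.
have ZP := Zpow k Z3 Z2.
have ZP2 : Z = eprod (epow D k) (epow Z k.+1).
  rewrite {1}ZP; symmetry; apply: epow_comm.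
  by symmetry; apply: epow_comm.
have Dk1 : epow D k = eprod Z (eprod D (epow D k)) by rewrite -[LHS]Z1.
split.
- rewrite /DMP /CMP !eprodA ?DYD0 ?DYD.
  split.
  + move=> H X [E ->].
    exists (eprodv (eprod D (epow D k)) E).
    rewrite -eprodvA; congr eprodv.
    by rewrite {1}Dk1 -eprodA H !eprodA -Dk1.
  + move=> H.
    have HP : eprod Y (eprod D (epow D k)) = epow D k.
      apply: teq => i j.
      have [F HF] := H (eprodv (epow D k) (@ebas R _ _ j)) (ex_intro _ (@ebas R _ _ j) erefl).
      rewrite -!eprodv_bas -eprodA eprodvA HF -eprodvA H2 //.
    rewrite ZP2 !eprodA -(eprodA D (epow D k)) -(eprodA Y (eprod D (epow D k))) HP.
    done.
- rewrite /MPD /CMP !eprodA ?DYD0 ?DYD.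
  have E1 : epow D k = eprod (epow D k) (eprod D Z).
    rewrite {1}Dk1 -[eprod D (epow D k)]/(epow D k.+1) -(epow_comm _ Z3) epowSr !eprodA //.
  have DkD : forall X, eprod D (eprod (epow D k) X) = eprod (epow D k) (eprod D X).
    by move=> X; rewrite -eprodA -[eprod D (epow D k)]/(epow D k.+1) epowSr eprodA.
  split.
  + move=> H.
    rewrite DkD {1}E1 H -(eprodA D Z) -(eprodA (epow D k)) -E1 //.
  + move=> H.
    have {}H : epow D k = eprod (epow D k) (eprod D Y) by rewrite -DkD; exact: H.
    by rewrite ZP !eprodA -H.
Qed.
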